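(* Let $F,G$ be absolutely continuous distribution functions with densities $f,g$, $\overline{F}=1-F$, $\overline{G}=1-G$. Let $X_1,\ldots,X_{n_1}$ be independent random variables such that $P(X_i>x)=[\overline{F}(x)]^{\alpha_i}$ for $i=1,\ldots,p_1$ and $P(X_i>x)=[\overline{G}(x)]^{\alpha_i}$ for $i=p_1+1,\ldots,n_1$; and let $Y_1,\ldots,Y_{n_2}$ be independent random variables such that $P(Y_i>x)=[\overline{F}(x)]^{\beta_i}$ for $i=1,\ldots,p_2$ and $P(Y_i>x)=[\overline{G}(x)]^{\beta_i}$ for $i=p_2+1,\ldots,n_2$, with all $\alpha_i,\beta_i>0$. If $\sum_{i=1}^{p_1}\alpha_i>\sum_{i=1}^{p_2}\beta_i$ and $\sum_{i=p_1+1}^{n_1}\alpha_i>\sum_{i=p_2+1}^{n_2}\beta_i$, then $X_{1:n_1}\leq_{hr}Y_{1:n_2}$.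
   Context: $X_{1:n}=\min(X_1,\ldots,X_n)$. For $X\sim F_X$, $Y\sim F_Y$, $X\leq_{hr}Y$ (hazard rate order) means $\overline{F}_Y(x)/\overline{F}_X(x)$ is increasing in $x$ over the union of the supports. *)

(* Defs.v *)
From HB Require Import structures.
From mathcomp Require Import all_boot all_order all_algebra.
From mathcomp Require Import all_classical all_reals all_analysis.
Set Implicit Arguments. Unset Strict Implicit. Unset Printing Implicit Defensive.
Import Order.TTheory GRing.Theory Num.Theory.
Import numFieldNormedType.Exports.
Local Open Scope classical_set_scope.
Local Open Scope ring_scope.

Definition abs_cont_cdf {R : realType} (F f : R -> R) : Prop :=
  [/\ (forall x, 0 <= f x),
      measurable_fun setT f,
      (\int[@lebesgue_measure R]_(t in setT) (f t)%:E = 1%:E)%E &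
      (forall x, ((F x)%:E = \int[@lebesgue_measure R]_(t in `]-oo, x]) (f t)%:E)%E)].

Definition mutually_independent {R : realType} {d : measure_display}
  {Omega : measurableType d} (P : probability Omega R) (n : nat)
  (X : 'I_n -> {RV P >-> R}) : Prop :=
  forall B : 'I_n -> set R, (forall i, measurable (B i)) ->
    P (\bigcap_(i in [set: 'I_n]) (X i @^-1` B i)) =
    (\prod_(i < n) P (X i @^-1` B i))%E.

(* The minimum X_{1:n} (meaningful for n >= 1). *)
Definition rv_min {R : realType} {T : Type} (n : nat) (X : 'I_n -> T -> R)
  (w : T) : R :=
  let vals := [seq X i w | i <- enum 'I_n] in
  \big[Order.min/head 0 vals]_(v <- vals) v.

Definition surv {R : realType} {d : measure_display} {Omega : measurableType d}
  (P : probability Omega R) (Z : Omega -> R) (x : R) : R :=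
  fine (P [set w | x < Z w]).

(* Hazard rate order Z1 <=_hr Z2: surv Z2 / surv Z1 is increasing, in the
   standard zero-safe cross-multiplied form. *)
Definition hr_le {R : realType} {d : measure_display} {Omega : measurableType d}
  (P : probability Omega R) (Z1 Z2 : Omega -> R) : Prop :=
  forall x y : R, x <= y ->
    surv P Z2 x * surv P Z1 y <= surv P Z1 x * surv P Z2 y.

(* Main.v *)
Require Import Defs.
From HB Require Import structures.
From mathcomp Require Import all_boot all_order all_algebra.
From mathcomp Require Import all_classical all_reals all_analysis.
From mathcomp Require Import lra.
Import Order.TTheory GRing.Theory Num.Theory.
Local Open Scope classical_set_scope.
Local Open Scope ring_scope.

Section H.
Variable R : realType.

Lemma key_ineq (u v a a' : R) : 0 <= v -> v <= u -> 0 <= a' -> a' < a ->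
  u `^ a' * v `^ a <= u `^ a * v `^ a'.
Proof.
move=> v0 vu a'0 aa'.
have [->|vn0] := eqVneq v 0.
  by rewrite (powR0 (x:=a)) ?mulr0 ?mulr_ge0 ?powR_ge0 // gt_eqF // (le_lt_trans a'0).
have vp : 0 < v by rewrite lt_def vn0 v0.
have up : 0 < u by exact: lt_le_trans vu.
have -> : a = (a - a') + a' by rewrite subrK.
have c0 : 0 < a - a' by rewrite subr_gt0.
move: (a - a') c0 => c c0.
rewrite !powRD ?gt_eqF ?implybT //.
have h : v `^ c <= u `^ c.
  apply: ge0_ler_powR => //; rewrite ?nnegrE ?subr_ge0 ?ltW //.
have := powR_ge0 u a'; have := powR_ge0 v a'.
set A := u `^ a'; set B := v `^ a'; set C := v `^ c; set D := u `^ c.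
move=> hB hA.
have hAB : 0 <= A * B by rewrite mulr_ge0.
have : 0 <= (D - C) * (A * B) by rewrite mulr_ge0 // subr_ge0.
move=> H; nra.
all: by rewrite ltr_wpDr.
Qed.

Lemma prod_powR n (P : pred 'I_n) (e : 'I_n -> R) (u : R) :
  (forall i, 0 < e i) ->
  \prod_(i < n | P i) u `^ e i = u `^ (\sum_(i < n | P i) e i).
Proof.
move=> ep.
pose K := fun y1 y2 : R => 0 <= y2 /\ y1 = u `^ y2.
suff [] : K (\prod_(i < n | P i) u `^ e i) (\sum_(i < n | P i) e i) by [].
apply: (big_rec2 K); first by split; rewrite ?powRr0.
move=> i y1 y2 _ [y20 ->]; split; first by rewrite addr_ge0 // ltW.
by rewrite powRD // gt_eqF // ltr_pwDl.
Qed.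

Lemma lt_bigmin_seq (x z : R) (s : seq R) :
  (x < \big[Order.min/z]_(v <- s) v) = (x < z) && all (fun v => x < v) s.
Proof.
elim: s => [|a s IH]; first by rewrite big_nil andbT.
by rewrite big_cons lt_min IH /= andbCA.
Qed.

Lemma rv_min_gt T n (X : 'I_n -> T -> R) w x : (0 < n)%N ->
  (x < rv_min X w) <-> (forall i, x < X i w).
Proof.
move=> n0; rewrite /rv_min lt_bigmin_seq.
set s := [seq X i w | i <- enum 'I_n].
have hs : head 0 s \in s.
  rewrite /s; case: n n0 X {s} => // n _ X.
  by rewrite enum_ordSl /= mem_head.
split.
  move=> /andP[_ /allP H] i; apply: H; apply/mapP; exists i => //; exact: mem_enum.
move=> H; have ha : all (fun v => x < v) s.
  by apply/allP => v /mapP[i _ ->].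
by rewrite ha andbT; move/allP: ha; apply.
Qed.


Lemma cdf_props (F f : R -> R) : abs_cont_cdf F f ->
  (forall x, F x <= 1) /\ (forall x y, x <= y -> F x <= F y).
Proof.
case=> f0 mf int1 Fe.
split.
  move=> x; rewrite -lee_fin Fe -int1.
  apply: (ge0_subset_integral).
  - exact: measurable_itv.
  - exact: measurableT.
  - apply/measurable_realfun.measurable_EFinP; exact: mf.
  - by move=> t _; rewrite lee_fin.
  - by [].
move=> x y xy; rewrite -lee_fin !Fe.
apply: ge0_subset_integral => //; try exact: measurable_itv.
    by apply/measurable_realfun.measurable_EFinP; apply: measurable_funTS; exact: mf.
  by move=> t _; rewrite lee_fin.
move=> t /=; rewrite !in_itv /= => tx; exact: le_trans tx xy.
Qed.

Lemma surv_min (d : measure_display) (Omega : measurableType d)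
  (P : probability Omega R) (F G : R -> R) n p (alpha : 'I_n -> R)
  (X : 'I_n -> {RV P >-> R}) x :
  (0 < n)%N -> (forall i, 0 < alpha i) -> mutually_independent X ->
  (forall (i : 'I_n) x, (i < p)%N ->
     P [set w | x < X i w] = ((1 - F x) `^ (alpha i))%:E) ->
  (forall (i : 'I_n) x, (p <= i)%N ->
     P [set w | x < X i w] = ((1 - G x) `^ (alpha i))%:E) ->
  surv P (rv_min (fun i => (X i : Omega -> R))) x =
    (1 - F x) `^ (\sum_(i < n | (i < p)%N) alpha i) *
    (1 - G x) `^ (\sum_(i < n | (p <= i)%N) alpha i).
Proof.
move=> n0 ap indep hF hG.
have E : [set w | x < rv_min (fun i => (X i : Omega -> R)) w] =
    \bigcap_(i in [set: 'I_n]) (X i @^-1` `]x, +oo[).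
  apply/seteqP; split => w /=.
    move/(@rv_min_gt _ _ _ _ _ n0) => H i _ /=; rewrite in_itv /= andbT; exact: H.
  move=> H; apply/(@rv_min_gt _ _ _ _ _ n0) => i; have := H i I.
  by rewrite /= in_itv /= andbT.
rewrite /surv E indep; last by move=> i; exact: measurable_itv.
rewrite (eq_bigr (fun i : 'I_n => (if (i < p)%N then (1 - F x) `^ alpha i
                            else (1 - G x) `^ alpha i)%:E)); last first.
  move=> i _.
  have -> : X i @^-1` `]x, +oo[ = [set w | x < X i w].
    by apply/seteqP; split => w /=; rewrite in_itv /= andbT.
  case: ifP => h; [exact: hF | apply: hG; rewrite leqNgt h //].
rewrite prodEFin /= (bigID (fun i : 'I_n => (i < p)%N)) /=.
have -> : \sum_(i < n | (p <= i)%N) alpha i = \sum_(i < n | ~~ (i < p)%N) alpha i.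
  by apply: eq_bigl => i; rewrite leqNgt.
rewrite -!prod_powR //; congr (_ * _); apply: eq_bigr => i.
  by move=> ->.
by move/negbTE => ->.
Qed.

End H.
Theorem theorem3 (R : realType) (d : measure_display) (Omega : measurableType d)
  (P : probability Omega R) (F G f g : R -> R)
  (n1 n2 p1 p2 : nat) (alpha : 'I_n1 -> R) (beta : 'I_n2 -> R)
  (X : 'I_n1 -> {RV P >-> R}) (Y : 'I_n2 -> {RV P >-> R}) :
  abs_cont_cdf F f -> abs_cont_cdf G g ->
  (0 < n1)%N -> (0 < n2)%N -> (p1 <= n1)%N -> (p2 <= n2)%N ->
  (forall i, 0 < alpha i) -> (forall i, 0 < beta i) ->
  mutually_independent X -> mutually_independent Y ->
  (forall (i : 'I_n1) x, (i < p1)%N ->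
     P [set w | x < X i w] = ((1 - F x) `^ (alpha i))%:E) ->
  (forall (i : 'I_n1) x, (p1 <= i)%N ->
     P [set w | x < X i w] = ((1 - G x) `^ (alpha i))%:E) ->
  (forall (i : 'I_n2) x, (i < p2)%N ->
     P [set w | x < Y i w] = ((1 - F x) `^ (beta i))%:E) ->
  (forall (i : 'I_n2) x, (p2 <= i)%N ->
     P [set w | x < Y i w] = ((1 - G x) `^ (beta i))%:E) ->
  \sum_(i < n1 | (i < p1)%N) alpha i > \sum_(i < n2 | (i < p2)%N) beta i ->
  \sum_(i < n1 | (p1 <= i)%N) alpha i > \sum_(i < n2 | (p2 <= i)%N) beta i ->
  hr_le P (rv_min (fun i => (X i : Omega -> R)))
          (rv_min (fun i => (Y i : Omega -> R))).
Proof.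
move=> hFc hGc n10 n20 _ _ ap bp iX iY hXF hXG hYF hYG hA hB x y xy.
rewrite (@surv_min _ _ _ _ _ _ _ _ _ _ x n10 ap iX hXF hXG).
rewrite (@surv_min _ _ _ _ _ _ _ _ _ _ y n10 ap iX hXF hXG).
rewrite (@surv_min _ _ _ _ _ _ _ _ _ _ x n20 bp iY hYF hYG).
rewrite (@surv_min _ _ _ _ _ _ _ _ _ _ y n20 bp iY hYF hYG).
have [F1 Fm] := cdf_props _ _ _ hFc.
have [G1 Gm] := cdf_props _ _ _ hGc.
set A := \sum_(i < n1 | (i < p1)%N) alpha i in hA *.
set B := \sum_(i < n1 | (p1 <= i)%N) alpha i in hB *.
set A' := \sum_(i < n2 | (i < p2)%N) beta i in hA *.
set B' := \sum_(i < n2 | (p2 <= i)%N) beta i in hB *.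
have A'0 : 0 <= A' by apply: sumr_ge0 => i _; exact: ltW.
have B'0 : 0 <= B' by apply: sumr_ge0 => i _; exact: ltW.
have k1 := @key_ineq _ (1 - F x) (1 - F y) A A'
  ltac:(by rewrite subr_ge0) ltac:(by rewrite lerD2l lerN2; exact: Fm) A'0 hA.
have k2 := @key_ineq _ (1 - G x) (1 - G y) B B'
  ltac:(by rewrite subr_ge0) ltac:(by rewrite lerD2l lerN2; exact: Gm) B'0 hB.
set a1 := (1 - F x) `^ A' in k1 *; set a2 := (1 - F y) `^ A in k1 *.
set a3 := (1 - F x) `^ A in k1 *; set a4 := (1 - F y) `^ A' in k1 *.
set b1 := (1 - G x) `^ B' in k2 *; set b2 := (1 - G y) `^ B in k2 *.
set b3 := (1 - G x) `^ B in k2 *; set b4 := (1 - G y) `^ B' in k2 *.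
have -> : a1 * b1 * (a2 * b2) = (a1 * a2) * (b1 * b2) by rewrite mulrACA.
have -> : a3 * b3 * (a4 * b4) = (a3 * a4) * (b3 * b4) by rewrite mulrACA.
apply: ler_pM => //; apply: mulr_ge0; exact: powR_ge0.
Qed.
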